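(* Let $K$ be a finite field of odd characteristic, $\omega\in K$ a non-square, and $d:V\times V\to K$ a non-degenerate symmetric bilinear form with $n=\dim V$ and $\operatorname{disc}d=[\omega^c]$, $c\in\{0,1\}$. Then the set of addresses of orthogonal bases of $d$ is $\{(n-(c+2k):c+2k) : 0\le k\le\frac{n-c}{2}\}$. In particular there are $1+\lfloor\frac{n-c}{2}\rfloor$ addresses.
   Context: The discriminant $\operatorname{disc}d$ is the class modulo $(K^\times)^2$ of the determinant of the Gram matrix of $d$ in any basis; $[a]$ denotes $a(K^\times)^2$. An orthogonal basis of $d$ is a basis $\{x_1,\dots,x_n\}$ of $V$ with $d(x_i,x_j)=0$ for $i\neq j$. Its address is $(n-s:s)$, where $s$ is the number of $i$ with $d(x_i,x_i)$ a non-square in $K$. *)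

(* Defs.v *)
From HB Require Import structures.
From mathcomp Require Import all_boot all_order all_algebra.
Set Implicit Arguments. Unset Strict Implicit. Unset Printing Implicit Defensive.
Import Order.TTheory GRing.Theory Num.Theory.
Local Open Scope ring_scope.

Definition is_square (K : finFieldType) (x : K) : bool := [exists y : K, y ^+ 2 == x].

Definition gram (K : fieldType) (V : vectType K) (n : nat) (d : V -> V -> K)
  (b : n.-tuple V) : 'M[K]_n := \matrix_(i, j) d (tnth b i) (tnth b j).

Definition sym_bilinear (K : fieldType) (V : vectType K) (d : V -> V -> K) : Prop :=
  (forall a x y z, d (a *: x + y) z = a * d x z + d y z) /\
  (forall a x y z, d x (a *: y + z) = a * d x y + d x z) /\
  (forall x y, d x y = d y x).

Definition nondeg_form (K : fieldType) (V : vectType K) (d : V -> V -> K) : Prop :=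
  forall x, (forall y, d x y = 0) -> x = 0.

(* disc d = [a] : the determinant of the Gram matrix in a basis lies in a (K^x)^2
   (independent of the chosen basis) *)
Definition disc_is (K : fieldType) (V : vectType K) (d : V -> V -> K) (a : K) : Prop :=
  exists b : (\dim (fullv : {vspace V})).-tuple V,
    basis_of fullv b /\ exists u : K, u != 0 /\ \det (gram d b) = a * u ^+ 2.

Definition orth_basis (K : fieldType) (V : vectType K) (d : V -> V -> K)
  (b : (\dim (fullv : {vspace V})).-tuple V) : Prop :=
  basis_of fullv b /\ forall i j, i != j -> d (tnth b i) (tnth b j) = 0.

Definition nonsq_count (K : finFieldType) (V : vectType K) (d : V -> V -> K)
  (b : (\dim (fullv : {vspace V})).-tuple V) : nat :=
  #|[set i | ~~ is_square (d (tnth b i) (tnth b i))]|.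

(* the address (n - s : s) of an orthogonal basis, encoded as the pair (n - s, s) *)
Definition is_address (K : finFieldType) (V : vectType K) (d : V -> V -> K)
  (p : nat * nat) : Prop :=
  exists b, orth_basis d b /\
    p = ((\dim (fullv : {vspace V}) - nonsq_count d b)%N, nonsq_count d b).

(* Main.v *)
Require Import Defs.
From HB Require Import structures.
From mathcomp Require Import all_boot all_order all_algebra.
From mathcomp Require Import zify ring lra.
From Stdlib Require Import Classical.
Import Order.TTheory GRing.Theory Num.Theory.
Local Open Scope ring_scope.

Section FF.
Variable K : finFieldType.
Hypothesis two : (2%:R : K) != 0.

Lemma sqP (x : K) : reflect (exists y, x = y ^+ 2) (is_square x).
Proof.
apply: (iffP existsP) => [[y /eqP <-]|[y ->]]; by exists y.
Qed.

Definition sqs := [set x : K | is_square x].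

Lemma card_sq : (#|sqs| * 2 = #|K| + 1)%N.
Proof.
have H : (#|K| = \sum_(y in sqs) #|[pred x : K | x ^+ 2 == y]|)%N.
  rewrite -sum1_card (partition_big (fun x : K => x ^+ 2) (mem sqs)).
    by apply: eq_bigr => y _; rewrite -sum1_card.
  move=> x _; rewrite /= inE; apply/sqP; by exists x.
have s0 : (0 : K) \in sqs by rewrite inE; apply/sqP; exists 0; rewrite expr0n.
rewrite H (bigD1 0) //= (cardsD1 0 sqs) s0.
have -> : #|[pred x : K | x ^+ 2 == 0]| = 1%N.
  by rewrite -[RHS](card1 (0 : K)); apply: eq_card => x; rewrite !inE /= sqrf_eq0.
rewrite (eq_bigr (fun _ => 2%N)); last first.
  move=> y /andP[]; rewrite inE => /sqP[z ->] nz.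
  have -> : #|[pred x : K | x ^+ 2 == z ^+ 2]| = #|pred2 z (- z)|.
    by apply: eq_card => x; rewrite !inE /= eqf_sqr.
  rewrite card2.
  have -> : z != - z.
    apply/negP => /eqP h; move: nz; rewrite h.
    have : z *+ 2 == 0 by rewrite mulr2n {1}h addNr.
    rewrite -mulr_natl mulf_eq0 (negbTE two) /= => /eqP ->.
    by rewrite oppr0 expr0n eqxx.
  by [].
rewrite sum_nat_const.
have -> : #|[pred i in sqs | i != 0]| = #|sqs :\ 0|.
  by apply: eq_card => x; rewrite !inE andbC.
set m := #|sqs :\ 0|. rewrite /= /nat_of_bool. lia.
Qed.

Lemma sqr_nonsq {w : K} : ~~ is_square w -> w != 0.
Proof. by apply: contraNneq => ->; apply/sqP; exists 0; rewrite expr0n. Qed.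

Lemma nonsq_omega (w : K) : ~~ is_square w ->
  forall x, ~~ is_square x -> exists r, x = w * r ^+ 2.
Proof.
move=> nw x nx.
have w0 := sqr_nonsq nw.
pose A := [set w * y | y in sqs :\ 0].
have cA : #|A| = #|sqs :\ 0| by rewrite card_imset //; apply: mulfI.
have sA : A \subset ~: sqs.
  apply/subsetP => z /imsetP[y]; rewrite !inE => /andP[y0 /sqP[t ey]] ->.
  have t0 : t != 0 by rewrite -sqrf_eq0 -ey.
  apply/sqP => -[u hu]; move/negP: nw; apply; apply/sqP.
  exists (u / t); rewrite expr_div_n -hu ey mulfK //.
  by rewrite expf_neq0.
have eA : A = ~: sqs.
  apply/eqP; rewrite eqEcard sA cA /=.
  have := cardsD1 0 sqs; have -> : (0 : K) \in sqs.
    by rewrite inE; apply/sqP; exists 0; rewrite expr0n.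
  have := cardsC sqs. set m := #|sqs :\ 0|. set q := #|sqs|. rewrite /nat_of_bool.
  have := card_sq. rewrite -/q. set r := #|~: sqs|. set kk := #|K|. lia.
have : x \in ~: sqs by rewrite inE inE.
rewrite -eA => /imsetP[y]; rewrite !inE => /andP[_ /sqP[r ->]] ->.
by exists r.
Qed.

Lemma represent (a b t : K) : a != 0 -> b != 0 ->
  exists x y, t = a * x ^+ 2 + b * y ^+ 2.
Proof.
move=> a0 b0.
pose A := [set a * y | y in sqs].
pose B := [set t - b * y | y in sqs].
have cA : #|A| = #|sqs| by rewrite card_imset //; apply: mulfI.
have cB : #|B| = #|sqs|.
  rewrite card_imset // => y1 y2 /= h.
  by apply: (mulfI b0); apply: oppr_inj; apply: (addrI t).
have := cardsUI A B; rewrite cA cB.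
have := max_card (A :|: B); have := card_sq.
move=> h1 h2 h3.
have : (0 < #|A :&: B|)%N by move: h1 h2 h3; set u := #|A :&: B|; set v := #|A :|: B|; set q := #|sqs|; set kk := #|K|; lia.
rewrite card_gt0 => /set0Pn[z]; rewrite inE => /andP[/imsetP[y1 hy1 ->]].
move=> /imsetP[y2 hy2] e.
move: hy1 hy2 e; rewrite !inE => /sqP[x ->] /sqP[y ->] e.
exists x, y; rewrite -[t](subrK (b * y ^+ 2)) -e; ring.
Qed.

Section Form.
Variables (V : vectType K) (d : V -> V -> K).
Hypothesis dl : forall a x y z, d (a *: x + y) z = a * d x z + d y z.
Hypothesis dr : forall a x y z, d x (a *: y + z) = a * d x y + d x z.
Hypothesis ds : forall x y, d x y = d y x.

Lemma d0l z : d 0 z = 0.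
Proof.
have := dl 1 0 0 z; rewrite scale1r !addr0 mul1r => h.
by apply: (addrI (d 0 z)); rewrite addr0 -h.
Qed.
Lemma d0r z : d z 0 = 0. Proof. by rewrite ds d0l. Qed.
Lemma dDl x y z : d (x + y) z = d x z + d y z.
Proof. by have := dl 1 x y z; rewrite scale1r mul1r. Qed.
Lemma dDr x y z : d z (x + y) = d z x + d z y.
Proof. by rewrite ds dDl !(ds z). Qed.
Lemma dZl a x z : d (a *: x) z = a * d x z.
Proof. by have := dl a x 0 z; rewrite addr0 d0l addr0. Qed.
Lemma dZr a x z : d z (a *: x) = a * d z x.
Proof. by rewrite ds dZl ds. Qed.
Lemma dNl x z : d (- x) z = - d x z.
Proof. by rewrite -scaleN1r dZl mulN1r. Qed.
Lemma dBl x y z : d (x - y) z = d x z - d y z.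
Proof. by rewrite dDl dNl. Qed.
Lemma dBr x y z : d z (x - y) = d z x - d z y.
Proof. by rewrite ds dBl !(ds z). Qed.
Lemma dsuml I (r : seq I) (P : pred I) F z :
  d (\sum_(i <- r | P i) F i) z = \sum_(i <- r | P i) d (F i) z.
Proof. by apply: (big_morph (fun x => d x z)) => [x y|]; rewrite ?dDl ?d0l. Qed.
Lemma dsumr I (r : seq I) (P : pred I) F z :
  d z (\sum_(i <- r | P i) F i) = \sum_(i <- r | P i) d z (F i).
Proof. by apply: (big_morph (fun x => d z x)) => [x y|]; rewrite ?dDr ?d0r. Qed.

Lemma orth_free n (X : n.-tuple V) :
  (forall i j, i != j -> d (tnth X i) (tnth X j) = 0) ->
  (forall i, d (tnth X i) (tnth X i) != 0) -> free X.
Proof.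
move=> ho hd; apply/freeP => k hk i.
have := congr1 (d (tnth X i)) hk; rewrite d0r dsumr (bigD1 i) //= big1.
  rewrite addr0 dZr -tnth_nth => /eqP; rewrite mulf_eq0 (negbTE (hd i)) orbF.
  by move/eqP.
by move=> j hj; rewrite dZr -tnth_nth ho ?mulr0 // eq_sym.
Qed.

Lemma orth_basis_of (X : (\dim (fullv : {vspace V})).-tuple V) :
  (forall i j, i != j -> d (tnth X i) (tnth X j) = 0) ->
  (forall i, d (tnth X i) (tnth X i) != 0) -> orth_basis d X.
Proof.
move=> ho hd; split => //; by rewrite basisEfree orth_free // subvf size_tuple leqnn.
Qed.

Lemma orth_span x (X : seq V) w :
  (forall v, v \in X -> d x v = 0) -> w \in <<X>>%VS -> d x w = 0.
Proof.
move=> h hw; rewrite (coord_span (X := in_tuple X) hw) dsumr big1 // => i _.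
by rewrite dZr h ?mulr0 // mem_nth.
Qed.

Lemma gram_schmidt m : forall U : {vspace V}, \dim U = m ->
  (forall x, x \in U -> (forall y, y \in U -> d x y = 0) -> x = 0) ->
  exists s : seq V, [/\ size s = m, {subset s <= U},
    (forall i j, (i < m)%N -> (j < m)%N -> i != j -> d s`_i s`_j = 0) &
    forall i, (i < m)%N -> d s`_i s`_i != 0].
Proof.
elim: m => [|m IH] U hdim hnd.
  by exists [::]; split.
have [x [xU dxx]] : exists x, x \in U /\ d x x != 0.
  apply: NNPP => hn.
  have h0 : forall x, x \in U -> d x x = 0.
    move=> x xU; case: (eqVneq (d x x) 0) => // h; exfalso.
    by apply: hn; exists x.
  have h1 : forall x y, x \in U -> y \in U -> d x y = 0.
    move=> x y xU yU; have := h0 _ (memvD xU yU).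
    rewrite dDl !dDr h0 // h0 // add0r addr0 (ds y x) -mulr2n -mulr_natl.
    by move/eqP; rewrite mulf_eq0 (negbTE two) /= => /eqP.
  have : U == 0%VS.
    rewrite -subv0; apply/subvP => x xU; rewrite memv0; apply/eqP.
    by apply: hnd => // y yU; apply: h1.
  by rewrite -dimv_eq0 hdim.
pose p y := y - (d x y / d x x) *: x.
have pU y : y \in U -> p y \in U by move=> yU; rewrite memvB ?memvZ.
have dxp y : d x (p y) = 0 by rewrite dBr dZr divfK ?subrr.
pose X := map p (vbasis U).
pose W := <<X>>%VS.
have WU : (W <= U)%VS.
  by apply/span_subvP => v /mapP[y /vbasis_mem yU ->]; apply: pU.
have dxW w : w \in W -> d x w = 0.
  by apply: orth_span => v /mapP[y _ ->].
have x0 : x != 0 by apply: contraNneq dxx => ->; rewrite d0l.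
have capW : (<[x]> :&: W = 0)%VS.
  apply/eqP; rewrite -subv0; apply/subvP => v; rewrite memv_cap memv0.
  case/andP=> /vlineP[k ->] hw; have := dxW _ hw; rewrite dZr => /eqP.
  by rewrite mulf_eq0 (negbTE dxx) orbF => /eqP ->; rewrite scale0r.
have UxW : U = (<[x]> + W)%VS.
  apply/eqP; rewrite eqEsubv subv_add WU andbT -memvE xU andbT.
  rewrite -(span_basis (vbasisP U)); apply/span_subvP => y yb.
  have -> : y = (d x y / d x x) *: x + p y by rewrite /p addrC subrK.
  by rewrite memv_add ?memvZ ?memv_line // memv_span // map_f.
have dW : \dim W = m.
  by move: hdim; rewrite UxW dimv_disjoint_sum // dim_vline x0 add1n => -[].
have ndW : forall y, y \in W -> (forall z, z \in W -> d y z = 0) -> y = 0.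
  move=> y yW hy; apply: hnd; first exact: (subvP WU).
  move=> z; rewrite UxW => /memv_addP[a /vlineP[k ->] [w wW ->]].
  by rewrite dDr dZr ds dxW // mulr0 hy // addr0.
have [s [ss sW so sd]] := IH W dW ndW.
exists (x :: s); split => /=.
- by rewrite ss.
- move=> v; rewrite inE => /predU1P[->//|/sW]; exact: (subvP WU).
- move=> [|i] [|j] //= hi hj hij.
  + by rewrite dxW // sW // mem_nth // ss.
  + by rewrite ds dxW // sW // mem_nth // ss.
  + by apply: so.
- by move=> [|i] //= hi; apply: sd.
Qed.

Local Notation n := (\dim (fullv : {vspace V})).

Lemma exists_orth : nondeg_form d -> exists b, orth_basis d b.
Proof.
move=> nd.
have [s [ss _ so sd]] := @gram_schmidt n fullv erefl
  (fun x _ h => nd x (fun y => h y (memvf y))).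
have hs : size s == n by rewrite ss.
exists (Tuple hs); apply: orth_basis_of => [i j hij|i]; rewrite !(tnth_nth 0) /=.
  by apply: so => //; apply/negP => /eqP/val_inj/eqP; apply/negP.
exact: sd.
Qed.

Lemma diag_nz b : nondeg_form d -> orth_basis d b ->
  forall i, d (tnth b i) (tnth b i) != 0.
Proof.
move=> nd [bb ho] i; apply/negP => /eqP h0.
have : tnth b i != 0 by apply: (free_not0 (basis_free bb)); apply: mem_tnth.
apply/negP; rewrite negbK; apply/eqP; apply: nd => y.
have yb : y \in <<b>>%VS by rewrite (span_basis bb) memvf.
rewrite (coord_span yb) dsumr big1 // => j _.
rewrite dZr -tnth_nth; case: (eqVneq i j) => [<-|ij]; first by rewrite h0 mulr0.
by rewrite ho // mulr0.
Qed.

Lemma modify b i j (t a c : K) : orth_basis d b -> i != j ->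
  t = a ^+ 2 * d (tnth b i) (tnth b i) + c ^+ 2 * d (tnth b j) (tnth b j) ->
  exists b' : n.-tuple V, [/\
    (forall k l, k != l -> d (tnth b' k) (tnth b' l) = 0),
    d (tnth b' i) (tnth b' i) = t,
    d (tnth b' j) (tnth b' j) =
       d (tnth b i) (tnth b i) * d (tnth b j) (tnth b j) * t &
    forall k, k != i -> k != j -> tnth b' k = tnth b k].
Proof.
move=> [bb ho] ij ht.
have [di edi] : {di | d (tnth b i) (tnth b i) = di} by eexists.
have [dj edj] : {dj | d (tnth b j) (tnth b j) = dj} by eexists.
rewrite edi edj in ht *.
pose x := a *: tnth b i + c *: tnth b j.
pose y := (c * dj) *: tnth b i - (a * di) *: tnth b j.
have ji : j != i by rewrite eq_sym.
have hij := ho i j ij; have hji := ho j i ji.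
have hji' : d (tnth b j) (tnth b i) = 0 by rewrite ds.
have xl l : l != i -> l != j -> d x (tnth b l) = 0.
  move=> li lj; rewrite /x !(dDl, dZl) !ho 1?eq_sym //; ring.
have yl l : l != i -> l != j -> d y (tnth b l) = 0.
  move=> li lj; rewrite /y !(dBl, dZl) !ho 1?eq_sym //; ring.
have xy : d x y = 0.
  rewrite /x /y !(dDl, dZl, dBr, dZr) hij hji' edi edj; ring.
have xx : d x x = t.
  rewrite /x !(dDl, dZl, dDr, dZr) hij hji' edi edj ht; ring.
have yy : d y y = di * dj * t.
  rewrite /y !(dBl, dZl, dBr, dZr) hij hji' edi edj ht; ring.
pose f k := if k == i then x else if k == j then y else tnth b k.
exists [tuple f k | k < n]; split.
- move=> k l kl; rewrite !tnth_mktuple /f.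
  case: (eqVneq k i) => [ki|ki]; case: (eqVneq l i) => [li|li].
  + by move: kl; rewrite ki li eqxx.
  + case: (eqVneq l j) => [lj|lj]; first by [].
    by rewrite xl.
  + case: (eqVneq k j) => [kj|kj]; first by rewrite ds.
    by rewrite ds xl.
  + case: (eqVneq k j) => [kj|kj]; case: (eqVneq l j) => [lj|lj].
    * by move: kl; rewrite kj lj eqxx.
    * by rewrite yl.
    * by rewrite ds yl.
    * by rewrite ho.
- by rewrite tnth_mktuple /f eqxx.
- by rewrite tnth_mktuple /f eqxx (negbTE ji).
- by move=> k ki kj; rewrite tnth_mktuple /f (negbTE ki) (negbTE kj).
Qed.

Lemma card2D (A : {set 'I_n}) {i j : 'I_n} : i != j ->
  #|A| = ((i \in A) + (j \in A) + #|A :\ i :\ j|)%N.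
Proof.
move=> ij; rewrite (cardsD1 i A) (cardsD1 j (A :\ i)) !inE eq_sym ij /=.
by rewrite addnA.
Qed.

Hypothesis nd : nondeg_form d.

Definition nsq (b : n.-tuple V) := [set i | ~~ is_square (d (tnth b i) (tnth b i))].

Lemma square_mul (u v : K) : is_square u -> is_square v -> is_square (u * v).
Proof.
move=> /sqP[x ->] /sqP[y ->]; apply/sqP; exists (x * y); ring.
Qed.

Lemma step {b : n.-tuple V} {i j : 'I_n} {t : K} : orth_basis d b -> i != j -> t != 0 ->
  exists b', orth_basis d b' /\
   #|nsq b'| = (~~ is_square t + ~~ is_square (d (tnth b i) (tnth b i) *
                 d (tnth b j) (tnth b j) * t)%R + #|nsq b :\ i :\ j|)%N.
Proof.
move=> ob ij t0.
have dnz := diag_nz b nd ob.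
have [x [y ht]] := represent _ _ t (dnz i) (dnz j).
have ht' : t = x ^+ 2 * d (tnth b i) (tnth b i) + y ^+ 2 * d (tnth b j) (tnth b j).
  by rewrite ht mulrC [y ^+ 2 * _]mulrC.
have [b' [ho hi hj hk]] := @modify b i j t x y ob ij ht'.
have ob' : orth_basis d b'.
  apply: orth_basis_of => // k.
  case: (eqVneq k i) => [->|ki]; first by rewrite hi.
  case: (eqVneq k j) => [->|kj]; first by rewrite hj !mulf_neq0.
  by rewrite hk.
exists b'; split => //.
rewrite (card2D _ ij) !inE hi hj; congr (_ + _)%N.
apply: eq_card => k; rewrite !inE.
case: (eqVneq k j) => //= kj; case: (eqVneq k i) => //= ki.
by rewrite hk.
Qed.

Lemma step_down (b : n.-tuple V) : orth_basis d b -> (2 <= #|nsq b|)%N ->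
  exists b', orth_basis d b' /\ (#|nsq b'| + 2 = #|nsq b|)%N.
Proof.
move=> ob h2.
have : (0 < #|nsq b|)%N by lia.
rewrite card_gt0 => /set0Pn[i iS].
have : (0 < #|nsq b :\ i|)%N by move: h2; rewrite (cardsD1 i) iS; lia.
rewrite card_gt0 => /set0Pn[j]; rewrite !inE => /andP[ji jS].
rewrite inE in iS.
have ij : i != j by rewrite eq_sym.
have [b' [ob' hc]] := step ob ij (oner_neq0 K).
exists b'; split => //.
have sq1 : is_square (1 : K) by apply/sqP; exists 1; rewrite expr1n.
have sqp : is_square (d (tnth b i) (tnth b i) * d (tnth b j) (tnth b j) * 1).
  have [r ->] := nonsq_omega _ iS _ jS.
  by rewrite mulr1 mulrA -expr2; apply/sqP; exists (d (tnth b i) (tnth b i) * r); ring.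
rewrite hc sq1 sqp (card2D (nsq b) ij) !inE iS jS /=.
by set m := #|nsq b :\ i :\ j|; rewrite /nat_of_bool; lia.
Qed.

Lemma step_up (b : n.-tuple V) (w : K) : ~~ is_square w -> orth_basis d b ->
  (#|nsq b| + 2 <= n)%N ->
  exists b', orth_basis d b' /\ (#|nsq b'| = #|nsq b| + 2)%N.
Proof.
move=> nw ob h2.
have cC : #|~: nsq b| = (n - #|nsq b|)%N.
  by have := cardsC (nsq b); rewrite card_ord; lia.
have : (0 < #|~: nsq b|)%N by rewrite cC; lia.
rewrite card_gt0 => /set0Pn[i iS].
have : (0 < #|~: nsq b :\ i|)%N by move: cC; rewrite (cardsD1 i) iS; lia.
rewrite card_gt0 => /set0Pn[j]; rewrite !inE negbK => /andP[ji jS].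
rewrite !inE negbK in iS.
have ij : i != j by rewrite eq_sym.
have [b' [ob' hc]] := step ob ij (sqr_nonsq nw).
exists b'; split => //.
have sqp : ~~ is_square (d (tnth b i) (tnth b i) * d (tnth b j) (tnth b j) * w).
  move: iS jS => /sqP[u eu] /sqP[v ev].
  have u0 : u != 0.
    by rewrite -sqrf_eq0 -eu; apply: (diag_nz b nd ob).
  have v0 : v != 0.
    by rewrite -sqrf_eq0 -ev; apply: (diag_nz b nd ob).
  apply/negP => /sqP[z ez]; move/negP: nw; apply; apply/sqP.
  exists (z / (u * v)); rewrite expr_div_n -ez eu ev.
  by field; rewrite u0 v0.
rewrite hc nw sqp (card2D (nsq b) ij) !inE iS jS /=.
by set m := #|nsq b :\ i :\ j|; rewrite /nat_of_bool; lia.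
Qed.

Lemma reach (w : K) (b : n.-tuple V) s : ~~ is_square w -> orth_basis d b ->
  (s <= n)%N -> odd s = odd #|nsq b| ->
  exists b', orth_basis d b' /\ #|nsq b'| = s.
Proof.
move=> nw ob sn hpar.
suff H : forall m (b : n.-tuple V), orth_basis d b -> odd s = odd #|nsq b| ->
    (#|nsq b| - s + (s - #|nsq b|) <= m)%N ->
    exists b', orth_basis d b' /\ #|nsq b'| = s.
  exact: (H _ b ob hpar (leqnn _)).
elim=> [|m IH] {ob hpar}b ob hpar hm.
  by exists b; split => //; apply/eqP; rewrite eqn_leq; move: hm; set c := #|nsq b|; lia.
have cn : (#|nsq b| <= n)%N by rewrite -[X in (_ <= X)%N]card_ord max_card.
case: (ltngtP #|nsq b| s) => hc; last by exists b.
- have hc2 : (#|nsq b| + 2 <= s)%N.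
    move: hc hpar; set c := #|nsq b| => hc hpar.
    case: (eqVneq s c.+1) => [e|ne]; first by move: hpar; rewrite e /=; case: (odd c).
    lia.
  have [b' [ob' e]] := @step_up b w nw ob (leq_trans hc2 sn).
  apply: (IH b' ob'); rewrite e.
    by rewrite oddD /= addbF.
  by move: hm hc2; set c := #|nsq b|; lia.
- have hc2 : (s + 2 <= #|nsq b|)%N.
    move: hc hpar; set c := #|nsq b| => hc hpar.
    case: (eqVneq c s.+1) => [e|ne]; first by move: hpar; rewrite e /=; case: (odd s).
    lia.
  have [b' [ob' e]] := @step_down b ob (leq_trans (leq_addl _ _) hc2).
  apply: (IH b' ob').
    by move: hpar; rewrite -e oddD /= addbF.
  by move: hm hc2; rewrite -e; set c := #|nsq b'|; lia.
Qed.

Lemma gram_change (b0 b : n.-tuple V) : basis_of fullv b0 ->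
  let P := \matrix_(i, j) coord b0 j (tnth b i) in
  gram d b = P *m gram d b0 *m P^T.
Proof.
move=> bb P; apply/matrixP => i k; rewrite !mxE.
have hb v : v \in <<b0>>%VS by rewrite (span_basis bb) memvf.
rewrite [X in d X _](coord_span (hb (tnth b i))).
rewrite [X in d _ X](coord_span (hb (tnth b k))).
rewrite dsuml.
under eq_bigr => j _ do rewrite dZl dsumr.
under [RHS]eq_bigr => l _ do rewrite !mxE mulr_suml.
rewrite exchange_big /=; apply: eq_bigr => j _; rewrite mulr_sumr.
apply: eq_bigr => l _; rewrite dZr !mxE -!(tnth_nth 0); ring.
Qed.

Lemma gram_diag (b : n.-tuple V) : orth_basis d b ->
  gram d b = diag_mx (\row_i d (tnth b i) (tnth b i)).
Proof.
move=> [_ ho]; apply/matrixP => i k; rewrite !mxE.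
by case: (eqVneq i k) => [->|ik]; rewrite ?mulr1n ?mulr0n // ho.
Qed.

Lemma parity (w : K) (a c : nat) (R U : K) : ~~ is_square w -> R != 0 ->
  w ^+ a * R ^+ 2 = w ^+ c * U ^+ 2 -> odd a = odd c.
Proof.
move=> nw R0 e.
have w0 := sqr_nonsq nw.
have U0 : U != 0.
  case: (eqVneq U 0) => // U0; exfalso; move: e; rewrite U0 expr0n /= mulr0.
  by apply/eqP; rewrite mulf_neq0 ?expf_neq0.
move: e; rewrite -{1}[a]odd_double_half -{1}[c]odd_double_half.
rewrite !exprD -!muln2 !exprM.
set A := w ^+ a./2 ^+ 2; set C := w ^+ c./2 ^+ 2.
have -> : w ^+ odd a * A * R ^+ 2 = w ^+ odd a * (w ^+ a./2 * R) ^+ 2.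
  by rewrite /A; ring.
have -> : w ^+ odd c * C * U ^+ 2 = w ^+ odd c * (w ^+ c./2 * U) ^+ 2.
  by rewrite /C; ring.
have A0 : w ^+ a./2 * R != 0 by rewrite mulf_neq0 ?expf_neq0.
have C0 : w ^+ c./2 * U != 0 by rewrite mulf_neq0 ?expf_neq0.
move: A0 C0; set X := w ^+ a./2 * R; set Y := w ^+ c./2 * U => X0 Y0.
case: (odd a); case: (odd c); rewrite /nat_of_bool ?expr1 ?expr0 ?mul1r => e //;
  exfalso; move/negP: nw; apply; apply/sqP.
- exists (Y / X); rewrite expr_div_n -e; field; exact: X0.
- exists (X / Y); rewrite expr_div_n e; field; exact: Y0.
Qed.

Lemma prod_form (w : K) (b : n.-tuple V) : ~~ is_square w -> orth_basis d b ->
  exists R, R != 0 /\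
    \prod_(i < n) d (tnth b i) (tnth b i) = w ^+ #|nsq b| * R ^+ 2.
Proof.
move=> nw ob.
have dnz := diag_nz b nd ob.
have -> : #|nsq b| = (\sum_(i < n) (i \in nsq b))%N.
  rewrite -sum1_card big_mkcond /=; apply: eq_bigr => i _.
  by case: (i \in nsq b).
apply: (big_rec2 (fun v e => exists R, R != 0 /\ v = w ^+ e * R ^+ 2)).
  by exists 1; rewrite oner_neq0 expr0 expr1n mulr1.
move=> i v e _ [R [R0 ->]].
case: (boolP (i \in nsq b)) => hi.
  have := hi; rewrite inE => /(nonsq_omega _ nw) [r er].
  have r0 : r != 0 by apply: contraNneq (dnz i) => r0; rewrite er r0 expr0n mulr0.
  exists (r * R); rewrite mulf_neq0 // er; split => //; rewrite /nat_of_bool add1n [w ^+ e.+1]exprS; ring.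
have := hi; rewrite inE negbK => /sqP[r er].
have r0 : r != 0 by apply: contraNneq (dnz i) => r0; rewrite er r0 expr0n.
exists (r * R); rewrite mulf_neq0 // er; split => //; rewrite /nat_of_bool add0n; ring.
Qed.

Lemma parity_basis (w : K) (c : nat) (b : n.-tuple V) : ~~ is_square w ->
  disc_is d (w ^+ c) -> orth_basis d b -> odd #|nsq b| = odd c.
Proof.
move=> nw [b0 [bb0 [u [u0 hu]]]] ob.
have [R [R0 hR]] := @prod_form w b nw ob.
apply: (@parity w _ c R (u * \det (\matrix_(i, j) coord b0 j (tnth b i))) nw R0).
have hg : \det (gram d b) = \prod_(i < n) d (tnth b i) (tnth b i).
  by rewrite gram_diag // det_diag; apply: eq_bigr => i _; rewrite mxE.
rewrite -hR -hg (gram_change b0 b bb0) /= !det_mulmx det_tr hu.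
ring.
Qed.

Lemma main_addr (w : K) (c : nat) : ~~ is_square w -> (c <= 1)%N ->
  disc_is d (w ^+ c) ->
  forall p : nat * nat, is_address d p <->
     exists k : nat, (c + 2 * k <= n)%N /\ p = ((n - (c + 2 * k))%N, (c + 2 * k)%N).
Proof.
move=> nw c1 hdisc p; split.
  move=> [b [ob ->]].
  have hp := @parity_basis w c b nw hdisc ob.
  have sn : (#|nsq b| <= n)%N by rewrite -[X in (_ <= X)%N]card_ord max_card.
  have e : #|nsq b| = (c + 2 * (#|nsq b|)./2)%N.
    rewrite -[LHS]odd_double_half hp mul2n.
    by case: c c1 {hdisc hp} => [|[|]].
  exists (#|nsq b|)./2; rewrite -e; split => //.
move=> [k [hk ->]].
have [b0 ob0] := exists_orth nd.
have hp := @parity_basis w c b0 nw hdisc ob0.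
have hpar : odd (c + 2 * k) = odd #|nsq b0| by rewrite hp oddD mul2n odd_double addbF.
have [b' [ob' e]] := @reach w b0 (c + 2 * k)%N nw ob0 hk hpar.
by exists b'; split => //; rewrite /nonsq_count -/(nsq b') e.
Qed.

Lemma c_le_n (w : K) (c : nat) : ~~ is_square w -> (c <= 1)%N ->
  disc_is d (w ^+ c) -> (c <= n)%N.
Proof.
move=> nw c1 hdisc.
have [b0 ob0] := exists_orth nd.
have hp := @parity_basis w c b0 nw hdisc ob0.
have sn : (#|nsq b0| <= n)%N by rewrite -[X in (_ <= X)%N]card_ord max_card.
case: c c1 hp {hdisc} => [|[|]] //= _ hp.
by apply: leq_trans sn; case: #|nsq b0| hp.
Qed.

End Form.
End FF.

Theorem corollary6p3 (K : finFieldType) (V : vectType K) (d : V -> V -> K)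
  (omega : K) (c : nat) :
  ~~ (2%N \in [pchar K]) ->
  ~~ is_square omega ->
  sym_bilinear d -> nondeg_form d ->
  (c <= 1)%N ->
  disc_is d (omega ^+ c) ->
  (forall p : nat * nat, is_address d p <->
     exists k : nat, (c + 2 * k <= \dim (fullv : {vspace V}))%N /\
       p = ((\dim (fullv : {vspace V}) - (c + 2 * k))%N, (c + 2 * k)%N)) /\
  (exists s : seq (nat * nat), uniq s /\ (forall p, p \in s <-> is_address d p) /\
     size s = (1 + (\dim (fullv : {vspace V}) - c)./2)%N).
Proof.
move=> h2 nw [dl [_ ds]] nd c1 hdisc.
have two : (2%:R : K) != 0.
  by apply: contraNneq h2 => e; rewrite inE /= e eqxx.
have MA := @main_addr K two V d dl ds nd omega c nw c1 hdisc.
have cn := @c_le_n K two V d dl ds nd omega c nw c1 hdisc.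
split => //.
set n := \dim (fullv : {vspace V}).
exists [seq ((n - (c + 2 * k))%N, (c + 2 * k)%N) | k <- iota 0 (1 + (n - c)./2)].
split; last split.
- rewrite map_inj_uniq ?iota_uniq // => k1 k2 [_] e; lia.
- move=> p; rewrite MA; split.
    move=> /mapP[k]; rewrite mem_iota => hk ->; exists k; split => //.
    move: hk; rewrite add0n -divn2; move: cn; lia.
  move=> [k [hk ->]]; apply/mapP; exists k => //; rewrite mem_iota add0n -divn2.
  move: hk cn; lia.
- by rewrite size_map size_iota.
Qed.
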